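(* Let $i\ge 0$ be an integer and let $G$ be an $\alpha_i$-metric graph. Then $diam(C(G))\le 3i+2$, i.e., any two central vertices of $G$ are at distance at most $3i+2$ in $G$.
   Context: All graphs are finite, connected, unweighted, undirected, without loops or multiple edges; $d(u,v)$ is the shortest-path distance in $G$. The interval $I(u,v)=\{x: d(u,x)+d(x,v)=d(u,v)\}$. A graph is $\alpha_i$-metric if for all vertices $u,v,w,x$: whenever $v\in I(u,w)$, $w\in I(v,x)$ and $v,w$ are adjacent, then $d(u,x)\ge d(u,v)+d(v,x)-i$. The eccentricity is $e(v)=\max_{u}d(u,v)$, the radius $rad(G)=\min_v e(v)$, and the center $C(G)=\{v: e(v)=rad(G)\}$; $diam(C(G))=\max\{d(x,y): x,y\in C(G)\}$ with distances taken in $G$. *)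

(* Defs.v *)
From mathcomp Require Import all_boot all_order.
Set Implicit Arguments. Unset Strict Implicit. Unset Printing Implicit Defensive.

Section Graph.
Variables (T : finType) (e : rel T).

Fixpoint nball (n : nat) (u : T) : {set T} :=
  match n with
  | 0 => [set u]
  | n'.+1 => nball n' u :|: [set y | [exists x in nball n' u, e x y]]
  end.

(* shortest-path distance: least n with v in the ball of radius n around u
   (for a connected graph on T this is < #|T|, so the search range suffices) *)
Definition dist (u v : T) : nat := find (fun n => v \in nball n u) (iota 0 #|T|).

Definition simple_graph : Prop := symmetric e /\ irreflexive e.
Definition connected_graph : Prop := forall u v : T, connect e u v.

Definition in_interval (u v x : T) : bool := dist u x + dist x v == dist u v.

Definition alpha_metric (i : nat) : Prop :=
  forall u v w x : T,
    in_interval u w v -> in_interval v x w -> e v w ->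
    dist u v + dist v x <= dist u x + i.

Definition ecc (v : T) : nat := \max_(u : T) dist u v.
Definition is_central (v : T) : Prop := forall w : T, ecc v <= ecc w.

End Graph.

(* Main.v *)
Require Import Defs.
From mathcomp Require Import all_boot all_order.
From mathcomp Require Import zify.
Set Implicit Arguments. Unset Strict Implicit. Unset Printing Implicit Defensive.

Section Aux.
Variables (T : finType) (e : rel T).
Hypothesis esym : symmetric e.
Hypothesis eirr : irreflexive e.
Hypothesis econ : forall u v : T, connect e u v.

Local Notation d := (dist e).
Local Notation B := (nball e).

Lemma nballS n u v : (v \in B n.+1 u) = (v \in B n u) || [exists x in B n u, e x v].
Proof. by rewrite /= in_setU inE. Qed.

Lemma nball_mono1 n u v : v \in B n u -> v \in B n.+1 u.
Proof. by move=> h; rewrite nballS h. Qed.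

Lemma nball_mono n m u v : n <= m -> v \in B n u -> v \in B m u.
Proof.
elim: m => [|m IH] hnm h; first by move: hnm; rewrite leqn0 => /eqP <-.
case: (ltngtP n m.+1) => hh; last by rewrite -hh.
  by apply: nball_mono1; apply: IH.
by lia.
Qed.

Lemma nball_edge n u v w : v \in B n u -> e v w -> w \in B n.+1 u.
Proof. by move=> h1 h2; rewrite nballS; apply/orP; right; apply/existsP; exists v; rewrite h1. Qed.

Lemma nball_cat a b u v w : v \in B a u -> w \in B b v -> w \in B (a + b) u.
Proof.
move=> hv; elim: b w => [|b IH] w /=.
  by rewrite addn0 inE => /eqP ->.
rewrite in_setU inE => /orP [h|/existsP [x /andP [hx exw]]].
  by rewrite addnS; apply: nball_mono1; apply: IH.
by rewrite addnS; apply: nball_edge exw; apply: IH.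
Qed.

Lemma nball_sym n u v : v \in B n u -> u \in B n v.
Proof.
elim: n v => [|n IH] v /=.
  by rewrite !inE => /eqP ->.
rewrite in_setU inE => /orP [h|/existsP [x /andP [hx exw]]].
  by apply: nball_mono1; apply: IH.
have h1 : x \in B 1 v by apply: (@nball_edge 0); [rewrite /= inE| rewrite esym].
by have := nball_cat h1 (IH _ hx); rewrite add1n.
Qed.

Lemma path_nball u p : path e u p -> last u p \in B (size p) u.
Proof.
elim: p u => [|a p IH] u /=; first by rewrite inE.
move=> /andP [eua hp].
have h1 : a \in B 1 u by apply: (@nball_edge 0); [rewrite /= inE|].
by have := nball_cat h1 (IH _ hp); rewrite add1n.
Qed.

Lemma nball_conn u v : exists n, n < #|T| /\ v \in B n u.
Proof.
have /connectP [p hp ->] := econ u v.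
case: (shortenP hp) => p' hp' hu _.
exists (size p'); split; last exact: path_nball.
have := max_card (mem (u :: p')).
by rewrite (card_uniqP hu) /=.
Qed.

Lemma dist_spec n u v : (v \in B n u) = (d u v <= n).
Proof.
rewrite /dist; set P := (fun n => v \in B n u).
have hs : has P (iota 0 #|T|).
  case: (nball_conn u v) => m [hm hv]; apply/hasP; exists m => //.
  by rewrite mem_iota.
have hf : find P (iota 0 #|T|) < #|T| by rewrite -[X in _ < X](size_iota 0) -has_find.
apply/idP/idP => [h|h].
  rewrite leqNgt; apply/negP => hlt.
  have := before_find 0 hlt; rewrite nth_iota; last by lia.
  by rewrite add0n /P h.
have := nth_find 0 hs; rewrite nth_iota // add0n => h2.
exact: nball_mono h h2.
Qed.

Lemma dist_in u v : v \in B (d u v) u.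
Proof. by rewrite dist_spec. Qed.

Lemma dist_refl u : d u u = 0.
Proof. by apply/eqP; rewrite -leqn0 -dist_spec /= inE. Qed.

Lemma dist0 u v : d u v = 0 -> u = v.
Proof. by move=> h; have := dist_in u v; rewrite h /= inE => /eqP. Qed.

Lemma dist_sym u v : d u v = d v u.
Proof.
by apply/eqP; rewrite eqn_leq -!dist_spec; apply/andP; split; apply: nball_sym; apply: dist_in.
Qed.

Lemma dist_tri u v w : d u w <= d u v + d v w.
Proof. by rewrite -dist_spec; apply: nball_cat; apply: dist_in. Qed.

Lemma dist_edge u v : e u v -> d u v = 1.
Proof.
move=> h; apply/eqP; rewrite eqn_leq -dist_spec (@nball_edge 0 u u) ?inE //=.
rewrite lt0n; apply/negP => /eqP /dist0 huv.
by move: h; rewrite huv eirr.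
Qed.

Lemma dist_pred n u v : d u v = n.+1 -> exists x, d u x = n /\ e x v.
Proof.
move=> h; have := dist_in u v; rewrite h nballS => /orP [h1|/existsP [x /andP [hx ex]]].
  by move: h1; rewrite dist_spec h ltnn.
exists x; split => //; apply/eqP; rewrite eqn_leq -dist_spec hx /=.
have := dist_tri u x v; rewrite (dist_edge ex) h => H.
by move: H; rewrite addn1 ltnS.
Qed.

Lemma dist1_edge u v : d u v = 1 -> e u v.
Proof. by move=> /dist_pred [x [/dist0 -> ex]]. Qed.

Lemma dist_level_aux n u v j : d u v = n -> j <= n -> exists w, d u w = j /\ d w v = n - j.
Proof.
elim: n v j => [|n IH] v j hn hj.
  exists u; move: hj; rewrite leqn0 => /eqP ->; split; first exact: dist_refl.
  by rewrite hn.
case: (ltngtP j n.+1) => hj2; last first.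
  by exists v; rewrite hj2 subnn dist_refl.
  by move: hj; rewrite leqNgt hj2.
case: (dist_pred hn) => x [hx ex].
have [w [hw1 hw2]] := IH x j hx (hj2 : j <= n).
exists w; split => //; apply/eqP; rewrite eqn_leq.
have := dist_tri w x v; have := dist_tri u w v; rewrite (dist_edge ex) hn hw1 hw2.
lia.
Qed.

Lemma dist_level u v j : j <= d u v -> exists w, d u w = j /\ d w v = d u v - j.
Proof. exact: dist_level_aux. Qed.

Lemma propL i s z y w0 v :
  alpha_metric e i -> s <= d z w0 -> d z y + i < s + d w0 y ->
  d v y = d v w0 + d w0 y -> s <= d z v.
Proof.
move=> ha hs hlt.
move: {2}(d w0 v) (erefl (d w0 v)) => n; elim: n v => [|n IH] v hn hv.
  by rewrite -(dist0 hn).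
case: (dist_pred hn) => v' [hv' ev'].
have dvv : d v v' = 1 by rewrite dist_sym dist_edge.
have hv'y : d v' y = d v' w0 + d w0 y.
  have := dist_tri v v' y; have := dist_tri v' w0 y.
  rewrite dist_sym in hn. rewrite dist_sym in hv'. lia.
have IH' := IH v' hv' hv'y.
have A : d v w0 = n.+1 by rewrite dist_sym.
have B' : d v' w0 = n by rewrite dist_sym.
have t1 := dist_tri z v v'.
have t2 := dist_tri z v' v.
rewrite (dist_sym v' v) dvv in t2.
rewrite dvv in t1.
case: (ltngtP (d z v) (d z v')) => h; last by rewrite h.
- have ee : d z v + d v v' = d z v' by rewrite dvv; lia.
  have ii : in_interval e z v' v by rewrite /in_interval ee.
  have jj : in_interval e v y v'.
    by rewrite /in_interval dvv hv'y hv A B'; apply/eqP; lia.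
  have ev : e v v' by rewrite esym.
  have := ha _ _ _ _ ii jj ev.
  rewrite hv A; lia.
- lia.
Qed.

End Aux.

Theorem theorem1 (T : finType) (e : rel T) (i : nat) :
  simple_graph e -> connected_graph e -> alpha_metric e i ->
  forall x y : T, is_central e x -> is_central e y -> dist e x y <= 3 * i + 2.
Proof.
move=> [esym eirr] hcon ha x y hx hy.
rewrite leqNgt; apply/negP => hk.
have sy := dist_sym esym hcon.
set r := ecc e x.
have dxr : forall z, dist e z x <= r.
  by move=> z; rewrite /r /ecc; exact: leq_bigmax.
have dyr : forall z, dist e z y <= r.
  move=> z; apply: leq_trans (hy x).
  by rewrite /ecc; exact: leq_bigmax.
have kr : dist e x y <= r by apply: dyr.
have [c [xc cy]] : exists c, dist e x c = i.+1 /\ dist e c y = dist e x y - i.+1.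
  apply: (dist_level eirr hcon) => //; lia.
have [p [cp py]] : exists p, dist e c p = i.+1 /\ dist e p y = dist e c y - i.+1.
  apply: (dist_level eirr hcon) => //; lia.
have xp : dist e x p = (i.+1).*2.
  have := dist_tri hcon x c p; have := dist_tri hcon x p y. lia.
have [z0 hz0] : exists z0, r <= dist e z0 c.
  case: (boolP [exists z0, r <= dist e z0 c]) => [/existsP [z0 h]|/existsP hn].
    by exists z0.
  have : ecc e c <= r.-1.
    apply/bigmax_leqP => u _.
    have : ~~ (r <= dist e u c) by apply/negP => h; apply: hn; exists u.
    lia.
  have := hx c; rewrite -/r; lia.
have [z [cz zz0]] : exists z, dist e c z = r /\ dist e z z0 = dist e c z0 - r.
  by apply: (dist_level eirr hcon) => //; rewrite sy.
have [q [cq qz]] : exists q, dist e c q = 1 /\ dist e q z = dist e c z - 1.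
  apply: (dist_level eirr hcon) => //; lia.
have ecq : e c q by apply: (dist1_edge eirr hcon).
have zx := dxr z. have zy := dyr z.
have zc : dist e z c = r by rewrite sy.
have zp1 : r <= dist e z p.
  apply: (@propL _ _ esym eirr hcon i r z x c p ha).
  - by rewrite zc.
  - rewrite (sy c x); lia.
  - rewrite (sy p x) (sy p c) (sy c x); lia.
have zp2 : dist e z p <= r.
  rewrite leqNgt; apply/negP => hlt.
  have H1 : dist e z y + i < r.+1 + dist e p y by lia.
  have H2 : dist e c y = dist e c p + dist e p y by lia.
  have := (@propL _ _ esym eirr hcon i r.+1 z y p c ha hlt H1 H2).
  rewrite zc; lia.
have xq : dist e x q <= i.+1.
  rewrite leqNgt; apply/negP => hlt.
  have h1 := dist_tri hcon x c q.
  have ii : in_interval e x q c by rewrite /in_interval; apply/eqP; lia.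
  have jj : in_interval e c z q by rewrite /in_interval; apply/eqP; lia.
  have := ha _ _ _ _ ii jj ecq.
  have zx' : dist e x z <= r by rewrite sy.
  have cz' : dist e c z = r by [].
  lia.
have qp : dist e q p <= i.+1.
  rewrite leqNgt; apply/negP => hlt.
  have h1 := dist_tri hcon q c p.
  have qc : dist e q c = 1 by rewrite sy.
  have zq : dist e z q = r - 1 by rewrite sy qz cz.
  have ii : in_interval e z c q by rewrite /in_interval; apply/eqP; lia.
  have jj : in_interval e q p c by rewrite /in_interval; apply/eqP; lia.
  have eqc : e q c by rewrite esym.
  have := ha _ _ _ _ ii jj eqc.
  lia.
have qy : dist e q y = dist e q p + dist e p y.
  have := dist_tri hcon q p y; have := dist_tri hcon x q y. lia.
have H1 : dist e z y + i < r + dist e p y by lia.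
have := (@propL _ _ esym eirr hcon i r z y p q ha zp1 H1 qy).
have zq : dist e z q = r - 1 by rewrite sy qz cz.
rewrite zq; lia.
Qed.
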